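(* Let $c\in[0,1]$. For every countable collection of languages $\mathcal{L}$, there is a set-based generator that generates in the limit from $\mathcal{L}$ and achieves set-based upper density at least $1-c$ under enumerations without noise and with $c$-omissions.
   Context: The universe is $U=\mathbb{N}$ with its natural order. A language is an infinite subset of $U$; a collection is a countable family of languages. For $A,B\subseteq\mathbb{N}$ with $B=\{b_1<b_2<\cdots\}$, $\mu_{\rm low}(A,B)=\liminf_n\frac1n|A\cap\{b_1,\dots,b_n\}|$. An enumeration of $K$ without noise and with $c$-omissions is a sequence listing each element of some $\hat K\subseteq K$ exactly once and nothing else, where $\mu_{\rm low}(\hat K,K)\ge1-c$; $S_n=\{x_1,\dots,x_n\}$. A set-based generator outputs at step $n$, from $x_1,\dots,x_n$ and knowledge of $\mathcal{L}$ (not $K$), a set $A_n\subseteq U\setminus S_n$. It generates in the limit if for every $K\in\mathcal{L}$ and admissible enumeration there is $n^\star$ with $A_n\subseteq K$ for all $n\ge n^\star$; it achieves set-based upper density $\rho$ if $\limsup_n\mu_{\rm low}(A_n,K)\ge\rho$. *)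

(* Defs.v *)
From HB Require Import structures.
From mathcomp Require Import all_boot all_order all_algebra.
From mathcomp Require Import all_classical all_reals all_analysis.
Set Implicit Arguments. Unset Strict Implicit. Unset Printing Implicit Defensive.
Import Order.TTheory GRing.Theory Num.Theory.
Local Open Scope classical_set_scope.
Local Open Scope ring_scope.

(* The universe U is nat; subsets are [set nat]. *)

Definition language (K : set nat) : Prop := infinite_set K.

Definition collection (C : set (set nat)) : Prop :=
  countable C /\ (forall K, C K -> language K).

Definition cnt (P : set nat) (m : nat) : nat := \sum_(k < m) `[< P k >].

(* nth_elem B n = b_{n+1}, the (n+1)-th smallest element of B (0-indexed):
   the element of B having exactly n elements of B below it. *)
Definition nth_elem (B : set nat) (n : nat) : nat :=
  xget 0%N [set m | B m /\ cnt B m = n].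

(* |A ∩ {b_1,...,b_n}| / n ; note {b_1..b_n} = B ∩ [0, b_{n+1}) *)
Definition dens_ratio {R : realType} (A B : set nat) (n : nat) : R :=
  (cnt (A `&` B) (nth_elem B n))%:R / n%:R.

Definition mu_low {R : realType} (A B : set nat) : \bar R :=
  limn_einf (fun n => ((dens_ratio A B n : R))%:E).

(* S_n = {x_1,...,x_n} as a list (x is 0-indexed: x_1 = x 0) *)
Definition prefix (x : nat -> nat) (n : nat) : seq nat := [seq x i | i <- iota 0 n].

(* enumeration of K without noise and with c-omissions: an (infinite) sequence
   listing each element of some Khat ⊆ K exactly once and nothing else,
   with mu_low(Khat, K) >= 1 - c *)
Definition admissible_enum {R : realType} (c : R) (K : set nat) (x : nat -> nat) : Prop :=
  exists Khat : set nat,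
    Khat `<=` K /\
    (forall i j, x i = x j -> i = j) /\
    (forall i, Khat (x i)) /\
    (forall y, Khat y -> exists i, x i = y) /\
    ((1 - c)%:E <= mu_low Khat K)%E.

Definition set_generator (G : seq nat -> set nat) : Prop :=
  forall s : seq nat, forall y, G s y -> y \notin s.

Definition gen_out (G : seq nat -> set nat) (x : nat -> nat) (n : nat) : set nat :=
  G (prefix x n).

Definition generates_in_limit {R : realType} (c : R) (C : set (set nat))
    (G : seq nat -> set nat) : Prop :=
  forall K, C K -> forall x, admissible_enum c K x ->
    exists nstar, forall n, (nstar <= n)%N -> (0 < n)%N -> gen_out G x n `<=` K.

Definition achieves_upper_density {R : realType} (c rho : R) (C : set (set nat))
    (G : seq nat -> set nat) : Prop :=
  forall K, C K -> forall x, admissible_enum c K x ->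
    (rho%:E <= limn_esup (fun n => mu_low (gen_out G x n.+1) K))%E.

(* Main.v *)
Require Import Defs.
From HB Require Import structures.
From mathcomp Require Import all_boot all_order all_algebra.
From mathcomp Require Import all_classical all_reals all_analysis.
From mathcomp Require Import lra zify.
Import Order.TTheory GRing.Theory Num.Theory.
Local Open Scope classical_set_scope.
Local Open Scope ring_scope.

Section Ana.
Context {R : realType}.

Lemma einf_eventually (v : nat -> R) (a e : R) : 0 < e ->
  (a%:E <= limn_einf (fun m => (v m)%:E))%E ->
  exists N, forall m, (N <= m)%N -> a - e < v m.
Proof.
move=> e0; rewrite limn_einf_lim.
have -> : limn (einfs (fun m => (v m)%:E)) =
   ereal_sup (range (einfs (fun m => (v m)%:E))).
  by apply/cvg_lim => //; exact: cvg_einfs_sup.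
move=> H.
have : ((a - e)%:E < ereal_sup (range (einfs (fun m => (v m)%:E))))%E.
  by apply: lt_le_trans H; rewrite lte_fin ltrBlDr ltrDl.
move=> /ereal_sup_gt [y [N _ <-]] HN.
exists N => m Nm.
have : (einfs (fun m => (v m)%:E) N <= (v m)%:E)%E.
  by apply: ereal_inf_lbound; exists m.
by move=> /(lt_le_trans HN); rewrite lte_fin.
Qed.

Lemma einf_pert (u v : nat -> R) (a n : R) : 0 <= n ->
  (forall m, v m <= u m + n / m%:R) ->
  (a%:E <= limn_einf (fun m => (v m)%:E))%E ->
  (a%:E <= limn_einf (fun m => (u m)%:E))%E.
Proof.
move=> n0 uv H; apply/lee_subgt0Pr => e e0.
have e20 : 0 < e / 2 by rewrite divr_gt0.
have [N HN] := @einf_eventually v a _ e20 H.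
rewrite limn_einf_lim; apply: lime_ge; first exact: is_cvg_einfs.
pose M := (Num.truncn (n / (e / 2))).+1.
exists (maxn N M) => // k /= Hk.
apply: le_ereal_inf_tmp => _ [m /= km <-].
have Nm : (N <= m)%N by apply: leq_trans km; apply: leq_trans Hk; exact: leq_maxl.
have Mm : (M <= m)%N by apply: leq_trans km; apply: leq_trans Hk; exact: leq_maxr.
have m0 : (0 < m)%N by apply: leq_trans Mm.
have m0R : 0 < m%:R :> R by rewrite ltr0n.
have hM : n / (e / 2) < m%:R.
  apply: lt_le_trans (truncnS_gt _) _; rewrite ler_nat; exact: Mm.
have hn : n / m%:R < e / 2.
  by rewrite ltr_pdivrMr // mulrC -ltr_pdivrMr.
have h2 := HN m Nm; have h1 := uv m.
rewrite -EFinB lee_fin.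
move: h1 h2 hn; set q := n / m%:R; set w := v m; move=> h1 h2 hn.
lra.
Qed.

Lemma esup_io (u : nat -> \bar R) (a : \bar R) :
  (forall N, exists2 k, (N <= k)%N & (a <= u k)%E) -> (a <= limn_esup u)%E.
Proof.
move=> H; rewrite limn_esup_lim; apply: lime_ge; first exact: is_cvg_esups.
apply: nearW => N; have [k Nk ak] := H N.
apply: le_trans ak _; apply: ereal_sup_ubound; by exists k.
Qed.
End Ana.
Lemma cntS (P : set nat) m : cnt P m.+1 = (cnt P m + `[< P m >])%N.
Proof. by rewrite /cnt big_ord_recr. Qed.

Lemma cnt_le (P Q : set nat) m : P `<=` Q -> (cnt P m <= cnt Q m)%N.
Proof.
move=> PQ; elim: m => [|m IH]; first by rewrite /cnt !big_ord0.
rewrite !cntS; apply: leq_add => //.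
case: (asboolP (P m)) => [/PQ Qm|_]; last by [].
by case: (asboolP (Q m)).
Qed.

Lemma cnt_U1 (P : set nat) a m : (cnt (P `|` [set a]) m <= cnt P m + 1)%N.
Proof.
suff: (cnt (P `|` [set a]) m <= cnt P m + (a < m))%N.
  by move=> h; apply: leq_trans h _; rewrite leq_add2l; case: (a < m)%N.
elim: m => [|m IH]; first by rewrite /cnt !big_ord0.
rewrite !cntS.
have [am|ham] := eqVneq a m.
  subst a.
  rewrite ltnn addn0 in IH; rewrite ltnSn.
  case: (asboolP (P m)) => _; case: (asboolP ((P `|` [set m]) m)) => _ /=; lia.
have -> : (a < m.+1)%N = (a < m)%N by rewrite ltnS leq_eqVlt (negbTE ham).
have -> : `[< (P `|` [set a]) m >] = `[< P m >].
  apply/asbool_equiv_eq; split => [[//|ma]|]; last by left.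
  by move: ham; rewrite ma eqxx.
lia.
Qed.

Lemma cnt_seq (K B : set nat) (s : seq nat) : forall (A : set nat) m,
  (forall y, B y -> y \notin s -> A y) ->
  (cnt (B `&` K) m <= cnt (A `&` K) m + size s)%N.
Proof.
elim: s => [|a s IH] A m H.
  rewrite addn0; apply: cnt_le => y [By Ky]; split => //; exact: H.
have H' : forall y, B y -> y \notin s -> (A `|` [set a]) y.
  move=> y By ys; have [->|ya] := eqVneq y a; first by right.
  left; apply: H => //; by rewrite in_cons negb_or ya.
apply: leq_trans (IH _ m H') _.
rewrite /= addnS -addn1 addnAC leq_add2r.
apply: leq_trans (cnt_U1 (A `&` K) a m).
apply: cnt_le => y [[Ay|->] Ky]; first by left.
by right.
Qed.
Notation pfx := Defs.prefix.
Definition alive (L : nat -> set nat) i (s : seq nat) : Prop :=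
  forall y, y \in s -> L i y.
Definition stepw (L : nat -> set nat) (s : seq nat) (y k : nat) : nat :=
  let j := find (fun i => `[< alive L i s /\ ~ L i y >]) (iota 0 k) in
  if (j < k)%N then j else k.+1.
Fixpoint Wf (L : nat -> set nat) (s : seq nat) (n : nat) : nat :=
  match n with 0 => 0%N | n'.+1 => stepw L (take n' s) (nth 0%N s n') (Wf L s n') end.
Definition Gen (L : nat -> set nat) (s : seq nat) : set nat :=
  [set y | (forall i, (i < Wf L s (size s))%N -> alive L i s -> L i y) /\ y \notin s].

Lemma Wf_take L s k m : (m <= k)%N -> Wf L (take k s) m = Wf L s m.
Proof.
elim: m => [//|m IH] mk /=.
rewrite IH ?(ltnW mk) // take_takel ?(ltnW mk) // nth_take //.
Qed.

Lemma size_pfx x n : size (pfx x n) = n.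
Proof. by rewrite /pfx /Defs.prefix size_map size_iota. Qed.

Lemma take_pfx x n k : (k <= n)%N -> take k (pfx x n) = pfx x k.
Proof. by move=> kn; rewrite /pfx /Defs.prefix -map_take take_iota (minn_idPl kn). Qed.

Lemma nth_pfx x n k : (k < n)%N -> nth 0%N (pfx x n) k = x k.
Proof. by move=> kn; rewrite /pfx /Defs.prefix (nth_map 0%N) ?size_iota // nth_iota. Qed.

Lemma mem_pfx x n y : (y \in pfx x n) <-> exists2 m, (m < n)%N & x m = y.
Proof.
split => [/mapP [m]|[m mn <-]].
  by rewrite mem_iota /= => mn ->; exists m.
by apply/mapP; exists m; rewrite // mem_iota.
Qed.

Lemma alive_pfx L i x n : alive L i (pfx x n) <-> (forall m, (m < n)%N -> L i (x m)).
Proof.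
split => [H m mn|H y /mem_pfx [m mn <-]]; last exact: H.
by apply: H; apply/mem_pfx; exists m.
Qed.

Definition wx L x n := Wf L (pfx x n) n.

Lemma wx0 L x : wx L x 0 = 0%N. Proof. by []. Qed.

Lemma wxS L x n : wx L x n.+1 = stepw L (pfx x n) (x n) (wx L x n).
Proof.
rewrite /wx /= take_pfx // nth_pfx //; congr stepw.
by by rewrite -(@Wf_take _ _ n n) ?take_pfx.
Qed.

Lemma find_iota0 (P : pred nat) k :
  let j := find P (iota 0 k) in
  (j <= k)%N /\ (forall i, (i < j)%N -> ~~ P i) /\ ((j < k)%N -> P j).
Proof.
move=> j; have Hs : size (iota 0 k) = k by rewrite size_iota.
have jk : (j <= k)%N by rewrite -[X in (_ <= X)%N]Hs find_size.
split => //; split.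
- move=> i ij; have := before_find 0%N ij.
  by rewrite nth_iota ?add0n ?(leq_trans ij jk) // => ->.
- move=> jk'; have := @nth_find _ 0%N P (iota 0 k).
  by rewrite has_find Hs nth_iota // => /(_ jk').
Qed.

Lemma stepP L s y k :
  (stepw L s y k = k.+1 /\ forall i, (i < k)%N -> ~ (alive L i s /\ ~ L i y)) \/
  (exists j, stepw L s y k = j /\ (j < k)%N /\ alive L j s /\ ~ L j y /\
      forall i, (i < j)%N -> ~ (alive L i s /\ ~ L i y)).
Proof.
rewrite /stepw; set P := (fun i => _); have [jk [bef hat]] := find_iota0 P k.
case: ifP => h.
  right; exists (find P (iota 0 k)); split => //; split => //.
  have := hat h; rewrite /P => /asboolP [? ?]; split => //; split => // i /bef.
  by move=> /asboolP.
left; split => // i ik; have /bef : (i < find P (iota 0 k))%N.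
  by apply: leq_trans ik _; rewrite leqNgt h.
by move=> /asboolP.
Qed.
Section Comb.
Variables (L : nat -> set nat) (x : nat -> nat).
Let al i n := forall m, (m < n)%N -> L i (x m).
Let forever i := forall m, L i (x m).

Lemma stepX n :
  (wx L x n.+1 = (wx L x n).+1 /\ forall i, (i < wx L x n)%N -> ~ (al i n /\ ~ L i (x n))) \/
  (exists j, wx L x n.+1 = j /\ (j < wx L x n)%N /\ al j n /\ ~ L j (x n) /\
      forall i, (i < j)%N -> ~ (al i n /\ ~ L i (x n))).
Proof.
rewrite wxS; case: (stepP L (pfx x n) (x n) (wx L x n)) => [[h1 h2]|[j [h1 [h2 [h3 [h4 h5]]]]]].
  left; split => // i ik [/alive_pfx a1 a2]; exact: (h2 i ik).
right; exists j; split => //; split => //; split; first exact/alive_pfx.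
split => // i ij [/alive_pfx a1 a2]; exact: (h5 i ij).
Qed.

Lemma one_T i : exists T, ~ forever i -> exists2 m, (m < T)%N & ~ L i (x m).
Proof.
have [f|nf] := pselect (forever i); first by exists 0%N.
have [m hm] : exists m, ~ L i (x m).
  by apply: contrapT => hh; apply: nf => m; apply: contrapT => hm; apply: hh; exists m.
by exists m.+1 => _; exists m.
Qed.

Lemma gen_T z : exists T, forall i, (i <= z)%N -> ~ forever i ->
  exists2 m, (m < T)%N & ~ L i (x m).
Proof.
elim: z => [|z [T HT]].
  have [T HT] := one_T 0; exists T => i; rewrite leqn0 => /eqP ->; exact: HT.
have [T' HT'] := one_T z.+1; exists (maxn T T') => i; rewrite leq_eqVlt => /orP [/eqP ->|iz] nf.
  have [m m1 m2] := HT' nf; exists m => //; apply: leq_trans m1 _; exact: leq_maxr.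
have [m m1 m2] := HT i iz nf; exists m => //; apply: leq_trans m1 _; exact: leq_maxl.
Qed.

Lemma wx_large z T : (forall i, (i <= z)%N -> ~ forever i ->
  exists2 m, (m < T)%N & ~ L i (x m)) ->
  forall d, (minn z.+1 d <= wx L x (T + d))%N.
Proof.
move=> HT; elim => [|d IH]; first by rewrite minn0.
rewrite addnS; case: (stepX (T + d)) => [[-> _]|[j [-> [_ [a1 [a2 _]]]]]].
  by move: IH; rewrite /minn; case: ifP; case: ifP => //; lia.
case: (leqP j z) => jz.
  exfalso; have [m m1 m2] := HT j jz (fun f => a2 (f _)).
  by apply: m2; apply: a1; apply: leq_trans m1 _; apply: leq_addr.
by apply: leq_trans (geq_minl _ _) _.
Qed.

Lemma clean N : exists2 n, (N <= n)%N & forall i, (i < wx L x n)%N -> al i n -> forever i.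
Proof.
have [ex|nex] := pselect (exists j, al j N /\ ~ forever j); last first.
  exists N => // i _ ai; apply: contrapT => nf; apply: nex; by exists i.
pose P := fun j => `[< al j N /\ ~ forever j >].
have exP : exists j, P j by case: ex => j hj; exists j; apply/asboolP.
pose j := ex_minn exP.
have [Pj minj] : P j /\ forall i, P i -> (j <= i)%N.
  by rewrite /j; case: ex_minnP.
move: Pj => /asboolP [ajN nfj].
pose Q := fun m => `[< ~ L j (x m) >].
have exQ : exists m, Q m.
  apply: contrapT => hh; apply: nfj => m; apply: contrapT => hm; apply: hh.
  by exists m; apply/asboolP.
pose m0 := ex_minn exQ.
have [Qm0 minm0] : Q m0 /\ forall m, Q m -> (m0 <= m)%N.
  by rewrite /m0; case: ex_minnP.
move: Qm0 => /asboolP Lm0.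
have Nm0 : (N <= m0)%N.
  by rewrite leqNgt; apply/negP => h; apply: Lm0; apply: ajN.
have ajm0 : al j m0.
  move=> m mm0; apply: contrapT => hm.
  by have := minm0 m (introT (asboolP _) hm); rewrite leqNgt mm0.
have key : forall i, (i <= j)%N -> al i m0 -> ~ (i < j)%N \/ forever i.
  move=> i ij aim0; case: (ltnP i j) => h; last by left.
  right; apply: contrapT => nfi.
  have : P i by apply/asboolP; split => // m mN; apply: aim0; apply: leq_trans Nm0.
  by move=> /minj; rewrite leqNgt h.
case: (ltnP j (wx L x m0)) => jw.
  exists m0.+1; first by apply: leq_trans Nm0 _.
  case: (stepX m0) => [[_ h]|[j' [-> [_ [_ [_ h]]]]]].
    by exfalso; apply: (h j jw).
  have j'j : (j' <= j)%N.
    by rewrite leqNgt; apply/negP => jj'; apply: (h j jj').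
  move=> i ij' aim.
  have ai0 : al i m0 by move=> m mm; apply: aim; apply: leq_trans mm _.
  case: (key i (ltnW (leq_trans ij' j'j)) ai0) => // hc.
  by exfalso; apply: hc; apply: leq_trans ij' j'j.
exists m0 => // i iw aim.
case: (key i (ltnW (leq_trans iw jw)) aim) => // hc.
by exfalso; apply: hc; apply: leq_trans iw jw.
Qed.
End Comb.
Lemma mu_low_seq {R : realType} (K B A : set nat) (s : seq nat) (a : R) :
  (forall y, B y -> y \notin s -> A y) ->
  (a%:E <= mu_low B K)%E -> (a%:E <= mu_low A K)%E.
Proof.
move=> H; rewrite /mu_low; apply: (@einf_pert R _ _ a (size s)%:R) => // m.
rewrite /dens_ratio -mulrDl ler_wpM2r ?invr_ge0 ?ler0n // -natrD ler_nat.
exact: cnt_seq.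
Qed.

Theorem proposition6p3 (R : realType) (c : R) (hc0 : 0 <= c) (hc1 : c <= 1)
    (C : set (set nat)) (hC : collection C) :
  exists G : seq nat -> set nat,
    set_generator G /\
    generates_in_limit c C G /\
    achieves_upper_density c (1 - c) C G.
Proof.
have [/countable_injP [f finj] _] := hC.
pose L := fun i => xget setT [set K | C K /\ f K = i].
have LfK : forall K, C K -> L (f K) = K.
  move=> K CK; have : [set K' | C K' /\ f K' = f K] (L (f K)).
    by apply: xgetPex; exists K.
  move=> [CK' e]; apply: finj => //; exact/mem_set.
have main : forall K, C K -> forall x, admissible_enum c K x ->
  exists nstar, (forall n, (nstar <= n)%N -> gen_out (Gen L) x n `<=` K) /\
   forall N, exists2 n, (N <= n)%N & ((1 - c)%:E <= mu_low (gen_out (Gen L) x n.+1) K)%E.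
  move=> K CK x [Khat [sub [_ [enum [cov dens]]]]].
  pose z := f K.
  have fz : forall m, L z (x m) by move=> m; rewrite /z LfK //; apply: sub; apply: enum.
  have [T HT] := gen_T L x z.
  have large := @wx_large L x z T HT.
  have big : forall n, (T + z.+1 <= n)%N -> (z < wx L x n)%N.
    move=> n hn; have := large (n - T)%N; rewrite subnKC; last by apply: leq_trans hn; apply: leq_addr.
    have -> : minn z.+1 (n - T)%N = z.+1 by apply/minn_idPl; lia.
    by [].
  exists (T + z.+1)%N; split.
    move=> n hn y [hy _]; rewrite -(LfK K CK); apply: hy.
      by rewrite size_pfx; exact: big.
    by apply/alive_pfx => m _; exact: fz.
  move=> N; have [n Nn cl] := clean L x (N.+1 + (T + z.+1))%N.
  exists n.-1; first by lia.
  have -> : n.-1.+1 = n by lia.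
  apply: (@mu_low_seq R K Khat _ (pfx x n)) dens => y Ky yn; split => //.
  rewrite size_pfx => i iw /alive_pfx ai.
  have [m <-] := cov y Ky; exact: (cl i iw ai).
exists (Gen L); split; first by move=> s y [_ ].
split.
  move=> K CK x ad; have [nstar [h _]] := main K CK x ad.
  by exists nstar => n hn _; exact: h.
move=> K CK x ad; have [nstar [_ h]] := main K CK x ad.
apply: esup_io => N; have [n Nn hn] := h N; by exists n.
Qed.
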